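(* Consider the problems LGopt and QEPmin defined in the context. (1) Let $(\lambda_*,u_* )$ be a minimizer of LGopt. Then there exists $z_*$ such that $(\lambda_*,z_* )$ is a minimizer of QEPmin; specifically, one may take $z_*=(PAP-\lambda_* I)^{\dagger}u_*$ if either $\lambda_*\notin\operatorname{eig}(PAP)$, or $\lambda_*\in\operatorname{eig}(PAP)$ but there is no corresponding eigenvector of $PAP$ lying in $\mathcal N(C^{\top})$; and $z_*=s$ if $\lambda_*\in\operatorname{eig}(PAP)$ and $s\in\mathcal N(C^{\top})$ is a corresponding eigenvector of $PAP$. (2) Let $(\lambda_*,z_* )$ be a minimizer of QEPmin. Then there exists $u_*\in\mathbb{R}^n$ such that $(\lambda_*,u_* )$ is a minimizer of LGopt; specifically, $u_*=-\frac{\gamma^2}{b_0^{\top}z_*}(PAP-\lambda_* I)z_*$ if $b_0^{\top}z_*\neq 0$, and $u_*=x_*+\sqrt{\gamma^2-\|x_*\|^2}\,\frac{z_*}{\|z_*\|}$ if $b_0^{\top}z_*=0$, where in the latter case $x_*=-(PAP-\lambda_* I)^{\dagger}b_0$, and it is guaranteed that $\|x_*\|\le\gamma$.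
   Context: Let $A\in\mathbb{R}^{n\times n}$ be symmetric, $C\in\mathbb{R}^{n\times m}$ ($m<n$) have full column rank, and $b\in\mathbb{R}^m$. Let $n_0=(C^{\top})^{\dagger}b=C(C^{\top}C)^{-1}b$; assume $\|n_0\|<1$ and set $\gamma=\sqrt{1-\|n_0\|^2}>0$. Let $P=I-C(C^{\top}C)^{-1}C^{\top}$ (the orthogonal projector onto the null space $\mathcal N(C^{\top})$) and $b_0=PAn_0$; assume $b_0\neq 0$. $X^\dagger$ is the Moore–Penrose inverse, $\operatorname{eig}(\cdot)$ the set of eigenvalues, norms are Euclidean. LGopt: minimize $\lambda$ over pairs $(\lambda,u)\in\mathbb{R}\times\mathbb{R}^n$ satisfying $(PAP-\lambda I)u=-b_0$, $\|u\|=\gamma$, $u\in\mathcal N(C^{\top})$; a minimizer is a feasible pair with the smallest $\lambda$. QEPmin: minimize $\lambda$ over pairs $(\lambda,z)$ with $\lambda\in\mathbb{R}$, $0\neq z\in\mathcal N(C^{\top})$ and $(PAP-\lambda I)^2z=\gamma^{-2}b_0b_0^{\top}z$; a minimizer is a feasible pair with the smallest $\lambda$. *)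

(* Defs.v *)
From mathcomp Require Import all_boot all_order all_algebra.
Set Implicit Arguments. Unset Strict Implicit. Unset Printing Implicit Defensive.
Import Order.TTheory GRing.Theory Num.Theory.
Local Open Scope ring_scope.

Section Defs.
Variable R : rcfType.

Definition dotv (k : nat) (u v : 'cV[R]_k) : R := (u^T *m v) 0 0.
Definition vnorm (k : nat) (u : 'cV[R]_k) : R := Num.sqrt (dotv u u).

Definition is_pinv (k : nat) (M X : 'M[R]_k) : Prop :=
  [/\ M *m X *m M = M, X *m M *m X = X,
      (M *m X)^T = M *m X & (X *m M)^T = X *m M].

Variables (n m : nat) (A : 'M[R]_n) (C : 'M[R]_(n, m)) (b : 'cV[R]_m).

Definition n0v : 'cV[R]_n := C *m invmx (C^T *m C) *m b.
Definition gam : R := Num.sqrt (1 - vnorm n0v ^+ 2).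
Definition Pmx : 'M[R]_n := 1%:M - C *m invmx (C^T *m C) *m C^T.
Definition b0v : 'cV[R]_n := Pmx *m A *m n0v.
Definition PAP : 'M[R]_n := Pmx *m A *m Pmx.
Definition shiftM (l : R) : 'M[R]_n := PAP - l%:M.
Definition inNull (u : 'cV[R]_n) : Prop := C^T *m u = 0.

Definition is_eigvec (M : 'M[R]_n) (l : R) (s : 'cV[R]_n) : Prop :=
  s != 0 /\ M *m s = l *: s.

Definition LG_feasible (l : R) (u : 'cV[R]_n) : Prop :=
  [/\ shiftM l *m u = - b0v, vnorm u = gam & inNull u].
Definition LG_minimizer (l : R) (u : 'cV[R]_n) : Prop :=
  LG_feasible l u /\ forall l' u', LG_feasible l' u' -> l <= l'.

Definition QEP_feasible (l : R) (z : 'cV[R]_n) : Prop :=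
  [/\ z != 0, inNull z &
      shiftM l *m (shiftM l *m z) = gam ^- 2 *: (b0v *m b0v^T *m z)].
Definition QEP_minimizer (l : R) (z : 'cV[R]_n) : Prop :=
  QEP_feasible l z /\ forall l' z', QEP_feasible l' z' -> l <= l'.
End Defs.

(* Main.v *)
Require Import Defs.
From mathcomp Require Import all_boot all_order all_algebra.
From mathcomp Require Import ring lra.
From Stdlib Require Import Classical.
Set Implicit Arguments. Unset Strict Implicit. Unset Printing Implicit Defensive.
Import Order.TTheory GRing.Theory Num.Theory.
Local Open Scope ring_scope.

Section Dot.
Variable R : rcfType.
Variable k : nat.
Implicit Types u v w : 'cV[R]_k.

Lemma dotvE u v : dotv u v = \sum_i u i 0 * v i 0.
Proof. by rewrite /dotv mxE; apply: eq_bigr => i _; rewrite mxE. Qed.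
Lemma dotvC u v : dotv u v = dotv v u.
Proof. by rewrite !dotvE; apply: eq_bigr => i _; exact: mulrC. Qed.
Lemma dotvDl u v w : dotv (u + v) w = dotv u w + dotv v w.
Proof. by rewrite !dotvE -big_split; apply: eq_bigr => i _; rewrite mxE mulrDl. Qed.
Lemma dotvDr u v w : dotv w (u + v) = dotv w u + dotv w v.
Proof. by rewrite dotvC dotvDl !(dotvC w). Qed.
Lemma dotvZl a u v : dotv (a *: u) v = a * dotv u v.
Proof. by rewrite !dotvE mulr_sumr; apply: eq_bigr => i _; rewrite mxE mulrA. Qed.
Lemma dotvZr a u v : dotv v (a *: u) = a * dotv v u.
Proof. by rewrite dotvC dotvZl dotvC. Qed.
Lemma dotvNl u v : dotv (- u) v = - dotv u v.
Proof. by rewrite -scaleN1r dotvZl mulN1r. Qed.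
Lemma dotvNr u v : dotv v (- u) = - dotv v u.
Proof. by rewrite -scaleN1r dotvZr mulN1r. Qed.
Lemma dotv0r u : dotv u 0 = 0.
Proof. by rewrite dotvE big1 // => i _; rewrite mxE mulr0. Qed.
Lemma dotv0l u : dotv 0 u = 0.
Proof. by rewrite dotvC dotv0r. Qed.
Lemma dotv_mul (Q : 'M[R]_k) u v : dotv u (Q *m v) = dotv (Q^T *m u) v.
Proof. by rewrite /dotv trmx_mul trmxK mulmxA. Qed.
Lemma dotv_ge0 u : 0 <= dotv u u.
Proof. by rewrite dotvE; apply: sumr_ge0 => i _; rewrite -expr2 sqr_ge0. Qed.
Lemma dotv_eq0 u : dotv u u = 0 -> u = 0.
Proof.
rewrite dotvE => /psumr_eq0P H0; apply/matrixP => i j; rewrite ord1 mxE.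
by apply/eqP; rewrite -sqrf_eq0 expr2 H0 // => l _; rewrite -expr2 sqr_ge0.
Qed.
Lemma dotv_neq0 u : u != 0 -> dotv u u != 0.
Proof. by apply: contra => /eqP /dotv_eq0 ->. Qed.
Lemma dotv_gt0 u : u != 0 -> 0 < dotv u u.
Proof. by move=> /dotv_neq0 h; rewrite lt_def h dotv_ge0. Qed.
Lemma vnorm_sq u : vnorm u ^+ 2 = dotv u u.
Proof. by rewrite /vnorm sqr_sqrtr // dotv_ge0. Qed.
Lemma vnorm_ge0 u : 0 <= vnorm u.
Proof. exact: sqrtr_ge0. Qed.
Lemma dotv_coord u i : u i 0 ^+ 2 <= dotv u u.
Proof.
rewrite dotvE (bigD1 i) //= expr2 lerDl; apply: sumr_ge0 => l _.
by rewrite -expr2 sqr_ge0.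
Qed.
Lemma quad_lb (Q : 'M[R]_k) v :
  - (\sum_i \sum_j `|Q i j|) * dotv v v <= dotv v (Q *m v).
Proof.
have -> : dotv v (Q *m v) = \sum_i \sum_j v i 0 * Q i j * v j 0.
  rewrite dotvE; apply: eq_bigr => i _; rewrite mxE mulr_sumr.
  by apply: eq_bigr => j _; rewrite mulrA.
rewrite mulNr mulr_suml -sumrN; apply: ler_sum => i _.
rewrite mulr_suml -sumrN; apply: ler_sum => j _.
have hi := dotv_coord v i; have hj := dotv_coord v j.
set d := dotv v v in hi hj *.
have h1 : `|v i 0| * `|v j 0| <= d.
  have a0 := normr_ge0 (v i 0); have b0 := normr_ge0 (v j 0).
  rewrite -real_normK ?num_real // in hi; rewrite -real_normK ?num_real // in hj.
  nra.
have : - (`|Q i j| * d) <= - `|v i 0 * Q i j * v j 0|.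
  rewrite lerN2 !normrM; have := normr_ge0 (Q i j); nra.
move=> h2; apply: le_trans h2 _.
exact: lerNnormlW.
Qed.
End Dot.

Lemma inj_unitmx (R : fieldType) k (N : 'M[R]_k) :
  (forall v : 'cV[R]_k, N *m v = 0 -> v = 0) -> N \in unitmx.
Proof.
move=> hN; rewrite unitmxE unitfE -det_tr; apply/negP => /det0P [v vn0 hv].
have : N *m v^T = 0 by rewrite -[N]trmxK -trmx_mul hv trmx0.
by move/hN => /(congr1 trmx); rewrite trmxK trmx0 => hv0; rewrite hv0 eqxx in vn0.
Qed.

Section Main.
Variables (R : rcfType) (n m : nat) (A : 'M[R]_n) (C : 'M[R]_(n, m)) (b : 'cV[R]_m).
Hypotheses (hA : A^T = A) (hC : \rank C = m) (hn0 : vnorm (n0v C b) < 1).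

Local Notation K := (invmx (C^T *m C)).
Local Notation P := (Pmx C).
Local Notation H := (PAP A C).
Local Notation b0 := (b0v A C b).
Local Notation g := (gam C b).
Local Notation M := (shiftM A C).
Local Notation inN u := (C^T *m u = 0).
Implicit Types (u v : 'cV[R]_n).

Lemma CtC_unit : C^T *m C \in unitmx.
Proof.
have /row_fullP [B hB] : row_full C by rewrite /row_full hC.
apply: inj_unitmx => v hv.
have hCv : C *m v = 0.
  apply: dotv_eq0; rewrite /dotv trmx_mul -mulmxA (mulmxA C^T) hv.
  by rewrite mulmx0 mxE.
by rewrite -[v]mul1mx -hB -mulmxA hCv mulmx0.
Qed.

Lemma K_sym : K^T = K.
Proof. by rewrite trmx_inv trmx_mul trmxK. Qed.

Lemma P_sym : P^T = P.
Proof.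
by rewrite /Pmx linearB /= trmx1 !trmx_mul trmxK K_sym mulmxA.
Qed.

Lemma CtP : C^T *m P = 0.
Proof.
rewrite /Pmx mulmxBr mulmx1 !mulmxA mulmxV ?CtC_unit // mul1mx.
by rewrite subrr.
Qed.

Lemma P_idem : P *m P = P.
Proof.
rewrite {1}/Pmx mulmxBl mul1mx -!mulmxA CtP !mulmx0 subr0 //.
Qed.

Lemma inNP u : inN u <-> P *m u = u.
Proof.
split=> h.
  by rewrite /Pmx mulmxBl mul1mx -[C *m _ *m C^T *m u]mulmxA h mulmx0 subr0.
by rewrite -h mulmxA CtP mul0mx.
Qed.

Lemma inN_P u : inN (P *m u).
Proof. by rewrite mulmxA CtP mul0mx. Qed.

Lemma H_sym : H^T = H.
Proof. by rewrite /PAP !trmx_mul P_sym hA mulmxA. Qed.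

Lemma PH : P *m H = H.
Proof. by rewrite /PAP !mulmxA P_idem. Qed.
Lemma HP : H *m P = H.
Proof. by rewrite /PAP -!mulmxA P_idem. Qed.

Lemma M_sym l : (M l)^T = M l.
Proof. by rewrite /shiftM linearB /= H_sym tr_scalar_mx. Qed.

Lemma MP l : M l *m P = P *m M l.
Proof.
by rewrite /shiftM mulmxBl HP mul_scalar_mx [RHS]mulmxBr PH mul_mx_scalar.
Qed.

Lemma b0_inN : inN b0.
Proof. by rewrite /b0v -!mulmxA inN_P. Qed.

Lemma g_gt0 : 0 < g.
Proof.
rewrite /gam sqrtr_gt0 subr_gt0.
have h0 := vnorm_ge0 (n0v C b).
have h2 := hn0; set v := vnorm _ in h0 h2 *.
have h1 : v * v <= v * 1 by rewrite ler_wpM2l // ltW.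
by rewrite expr2; apply: le_lt_trans h1 _; rewrite mulr1.
Qed.

Lemma g_neq0 : g != 0.
Proof. by rewrite gt_eqF ?g_gt0. Qed.

Lemma vnorm_eq_g u : (vnorm u = g) <-> dotv u u = g ^+ 2.
Proof.
split=> [<-|h]; first by rewrite vnorm_sq.
by rewrite /vnorm h sqrtr_sqr ger0_norm // ltW // g_gt0.
Qed.

Lemma MinN l u : inN u -> inN (M l *m u).
Proof. by move=> /inNP hu; apply/inNP; rewrite mulmxA -MP -mulmxA hu. Qed.

Definition Ht l : 'M[R]_n := H + (1%:M - P) - l *: P.

Lemma Ht_sym l : (Ht l)^T = Ht l.
Proof.
have gen (X Y : 'M[R]_n) : X^T = X -> Y^T = Y -> (X + (1%:M - Y) - l *: Y)^T = X + (1%:M - Y) - l *: Y.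
  by move=> hX hY; rewrite !linearD !linearN /= !linearZ /= trmx1 hX hY.
by rewrite /Ht gen ?H_sym ?P_sym.
Qed.

Lemma QHt_gen (X Y : 'M[R]_n) l : Y *m Y = Y -> Y *m X = X ->
  (1%:M - Y) *m (X + (1%:M - Y) - l *: Y) = 1%:M - Y.
Proof.
move=> hYY hYX.
have e1 : (1%:M - Y) *m X = 0 by rewrite mulmxBl mul1mx hYX subrr.
have e2 : (1%:M - Y) *m Y = 0 by rewrite mulmxBl mul1mx hYY subrr.
have e3 : (1%:M - Y) *m (1%:M - Y) = 1%:M - Y by rewrite mulmxBr mulmx1 e2 subr0.
by rewrite mulmxDr mulmxDr e1 e3 mulmxN -scalemxAr e2 scaler0 oppr0 add0r addr0.
Qed.

Lemma QHt l : (1%:M - P) *m Ht l = 1%:M - P.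
Proof. by rewrite /Ht QHt_gen ?P_idem ?PH. Qed.

Lemma Ht_gen (X Y : 'M[R]_n) l u : Y *m u = u ->
  (X + (1%:M - Y) - l *: Y) *m u = (X - l%:M) *m u.
Proof.
move=> hu.
have e : (1%:M - Y) *m u = 0 by rewrite mulmxBl mul1mx hu subrr.
by rewrite mulmxDl mulmxDl e addr0 mulNmx -scalemxAl hu [RHS]mulmxBl mul_scalar_mx.
Qed.

Lemma Ht_inN l u : inN u -> Ht l *m u = M l *m u.
Proof. by move=> /inNP hu; rewrite /Ht Ht_gen. Qed.

Lemma Ht_sol l u v : inN v -> Ht l *m u = v -> inN u.
Proof.
move=> hv hu.
have e : (1%:M - P) *m u = 0.
  by rewrite -(QHt l) -mulmxA hu mulmxBl mul1mx (proj1 (inNP v) hv) subrr.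
apply/inNP; move: e; rewrite mulmxBl mul1mx => /eqP; rewrite subr_eq0 => /eqP e.
by rewrite -e.
Qed.


Lemma bbz z : b0 *m b0^T *m z = dotv b0 z *: b0.
Proof. by rewrite -mulmxA [b0^T *m z]mx11_scalar mul_mx_scalar. Qed.

Lemma LGP l u : LG_feasible A C b l u <-> [/\ M l *m u = - b0, dotv u u = g ^+ 2 & inN u].
Proof.
rewrite /LG_feasible /inNull; split=> [[h1 h2 h3]|[h1 h2 h3]]; split=> //.
  by apply/vnorm_eq_g.
by apply/vnorm_eq_g.
Qed.

Lemma dotM l u v : dotv u (M l *m v) = dotv (M l *m u) v.
Proof. by rewrite dotv_mul M_sym. Qed.

Lemma eig_QEP l u s : LG_feasible A C b l u -> s != 0 -> inN s -> M l *m s = 0 ->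
  QEP_feasible A C b l s.
Proof.
move=> /LGP [h1 h2 h3] hs hsN hMs; split => //.
have hb : dotv b0 s = 0 by rewrite -[b0]opprK -h1 dotvNl -dotM hMs dotv0r oppr0.
by rewrite hMs mulmx0 bbz hb scale0r scaler0.
Qed.

Lemma unit_QEP l u : LG_feasible A C b l u -> Ht l \in unitmx ->
  QEP_feasible A C b l (invmx (Ht l) *m u).
Proof.
move=> /LGP [h1 h2 h3] hU; set z := invmx (Ht l) *m u.
have hz : Ht l *m z = u by rewrite /z mulmxA mulmxV // mul1mx.
have hzN : inN z := Ht_sol h3 hz.
have hMz : M l *m z = u by rewrite -Ht_inN.
split => //.
  apply/eqP => z0; move: h2; rewrite -hz z0 mulmx0 dotv0r => /esym/eqP.
  by rewrite expf_eq0 /= (negPf g_neq0).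
rewrite hMz h1 bbz.
have hb : dotv b0 z = - g ^+ 2 by rewrite -[b0]opprK -h1 dotvNl -dotM hMz h2.
rewrite hb scalerA.
have -> : g ^- 2 * - g ^+ 2 = -1 by field; rewrite g_neq0.
by rewrite scaleN1r.
Qed.

Lemma Ht_nonunit l : Ht l \notin unitmx -> exists s : 'cV[R]_n, [/\ s != 0, inN s & M l *m s = 0].
Proof.
rewrite unitmxE unitfE negbK => /det0P [v vn0 hv].
have hs : Ht l *m v^T = 0 by rewrite -Ht_sym -trmx_mul hv trmx0.
have hsN : inN v^T by apply: (Ht_sol (v := 0)); [rewrite mulmx0 | exact: hs].
exists v^T; split => //; last by rewrite -Ht_inN.
by rewrite trmx_eq0.
Qed.

Lemma LG2QEP l u : LG_feasible A C b l u -> exists z, QEP_feasible A C b l z.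
Proof.
move=> hu; case: (boolP (Ht l \in unitmx)) => hU.
  by exists (invmx (Ht l) *m u); apply: unit_QEP.
have [s [hs hsN hMs]] := Ht_nonunit hU.
by exists s; apply: eig_QEP hu hs hsN hMs.
Qed.

Lemma QEP_beta l z : QEP_feasible A C b l z -> dotv b0 z != 0 ->
  LG_feasible A C b l ((- (g ^+ 2 / dotv b0 z)) *: (M l *m z)).
Proof.
move=> [hz hzN hQ] hb; apply/LGP; rewrite bbz in hQ; split.
- rewrite -scalemxAr hQ !scalerA -[RHS]scaleN1r; congr (_ *: _).
  by field; rewrite hb g_neq0.
- rewrite dotvZl dotvZr dotM hQ !dotvZl.
  by field; rewrite hb g_neq0.
- by rewrite -scalemxAr (MinN l hzN) scaler0.
Qed.

Lemma QEP_beta0 l z : QEP_feasible A C b l z -> dotv b0 z = 0 -> M l *m z = 0.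
Proof.
move=> [hz hzN hQ] hb; apply: dotv_eq0.
by rewrite -dotM hQ bbz hb scale0r scaler0 dotv0r.
Qed.

Definition HX : 'M[{poly R}]_n := map_mx polyC (H + (1%:M - P)) - 'X *: map_mx polyC P.
Definition b0p : 'cV[{poly R}]_n := map_mx polyC b0.
Definition ev (l : R) (w : 'cV[{poly R}]_n) : 'cV[R]_n := map_mx (horner_eval l) w.
Definition Pair (w : 'cV[{poly R}]_n) (q : {poly R}) := HX *m w = q *: b0p.

Lemma evHX l : map_mx (horner_eval l) HX = Ht l.
Proof. by apply/matrixP => i j; rewrite /Ht !mxE /horner_eval !hornerE mulrC. Qed.

Lemma ev_mul l w : ev l (HX *m w) = Ht l *m ev l w.
Proof. by rewrite /ev map_mxM evHX. Qed.

Lemma ev_b0p l : ev l b0p = b0.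
Proof. by apply/matrixP => i j; rewrite !mxE /horner_eval hornerC. Qed.

Lemma Pair_ev w q l : Pair w q -> Ht l *m ev l w = q.[l] *: b0.
Proof. by move=> hP; rewrite -ev_mul hP /ev map_mxZ -/(ev l b0p) ev_b0p. Qed.

Lemma Pair_evN w q l : Pair w q -> inN (ev l w).
Proof.
move=> hP; apply: (Ht_sol (l := l) (v := q.[l] *: b0)); last exact: Pair_ev.
by rewrite -scalemxAr b0_inN scaler0.
Qed.

Definition cH := \sum_i \sum_j `|H i j|.

Lemma Ht_pos l v : inN v -> (- cH - l) * dotv v v <= dotv v (Ht l *m v).
Proof.
move=> hv; rewrite Ht_inN // /shiftM mulmxBl mul_scalar_mx dotvDr dotvNr dotvZr.
rewrite mulrBl; apply: lerB => //; exact: quad_lb.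
Qed.

Lemma Ht_inj l v : l < - cH -> Ht l *m v = 0 -> v = 0.
Proof.
move=> hl hv.
have hvN : inN v by apply: (Ht_sol (v := 0)); [rewrite mulmx0 | exact: hv].
have := Ht_pos l hvN; rewrite hv dotv0r => h.
apply: dotv_eq0; apply/eqP; rewrite eq_le dotv_ge0 andbT.
have hk : 0 < - cH - l by rewrite subr_gt0.
by rewrite -(pmulr_rle0 _ hk).
Qed.

Lemma Ht_bound l x : l < - cH -> inN x -> Ht l *m x = b0 ->
  (- cH - l) ^+ 2 * dotv x x <= dotv b0 b0.
Proof.
move=> hl hx hHx; have := Ht_pos l hx; rewrite hHx => h1.
have hk : 0 < - cH - l by rewrite subr_gt0.
set kk := - cH - l in h1 hk *.
have h2 := dotv_ge0 (b0 + (- kk) *: x).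
rewrite !dotvDl !dotvDr !dotvZl !dotvZr (dotvC b0 x) in h2.
have h3 := dotv_ge0 x.
set t := dotv x b0 in h1 h2; set d := dotv x x in h1 h2 h3 *.
nra.
Qed.

Lemma good_pair_ind k : forall (w : 'cV[{poly R}]_n) (q : {poly R}), q != 0 -> (size q <= k)%N -> Pair w q ->
  exists w' q', [/\ q' != 0, Pair w' q' & forall l, q'.[l] = 0 -> ev l w' != 0].
Proof.
elim: k => [|k IH] w q hq hs hP.
  by move: hs; rewrite leqn0 size_poly_eq0 (negPf hq).
case: (classic (exists l, q.[l] = 0 /\ ev l w = 0)) => [[l [hql hwl]]|hno]; last first.
  exists w, q; split => // l hl; apply/eqP => h; apply: hno; by exists l.
set d := 'X - l%:P.
have dn0 : d != 0 by rewrite polyXsubC_eq0.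
have hdq : d %| q by rewrite dvdp_XsubCl rootE hql eqxx.
have hdw i j : d %| w i j.
  rewrite dvdp_XsubCl rootE; move/matrixP: hwl => /(_ i j); rewrite !mxE => h.
  by rewrite -horner_evalE h eqxx.
set q1 := q %/ d; set w1 := map_mx (fun p => p %/ d) w.
have eq : q = q1 * d by rewrite divpK.
have ew : w = d *: w1.
  by apply/matrixP => i j; rewrite !mxE mulrC divpK.
have hq1 : q1 != 0 by apply: contraNneq hq => h; rewrite eq h mul0r.
have hs1 : (size q1 <= k)%N.
  rewrite size_divp // size_XsubC /=.
  have : (0 < size q)%N by rewrite lt0n size_poly_eq0.
  move: hs; case: (size q) => // s' hs _; rewrite subn1 /=; exact: hs.
apply: (IH w1 q1) => //.
move: hP; rewrite /Pair ew eq -scalemxAr [q1 * d]mulrC -scalerA => E.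
apply/matrixP => i j; move/matrixP: E => /(_ i j); rewrite !mxE.
by move/(mulfI dn0).
Qed.

Lemma CORE mu :
  (exists l0, l0 < mu /\ exists u, LG_feasible A C b l0 u) \/
  (exists x0, [/\ M mu *m x0 = - b0, inN x0 & dotv x0 x0 <= g ^+ 2]).
Proof.
set bb := dotv b0 b0.
have g2 : 0 < g ^+ 2 by rewrite exprn_gt0 // g_gt0.
have bb0 : 0 <= bb := dotv_ge0 b0.
set kk := 1 + `|cH| + `|mu| + bb / g ^+ 2.
have hbg : 0 <= bb / g ^+ 2 by rewrite divr_ge0 // ltW.
have kk1 : 1 <= kk.
  have := normr_ge0 cH; have := normr_ge0 mu; rewrite /kk; lra.
have kkpos : 0 < kk by apply: lt_le_trans kk1.
set l1 := - cH - kk.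
have hl1c : l1 < - cH by rewrite /l1 ltrBlDr ltrDl.
have hl1mu : l1 < mu.
  have h1 : - cH <= `|cH| by rewrite -normrN ler_norm.
  have h2 : - `|mu| <= mu by apply: lerNnormlW.
  have := normr_ge0 mu; rewrite /l1 /kk; lra.
have kkb : bb < kk ^+ 2 * g ^+ 2.
  have h1 : bb / g ^+ 2 < kk by rewrite /kk; have := normr_ge0 cH; have := normr_ge0 mu; lra.
  have h2 : bb < kk * g ^+ 2 by rewrite -ltr_pdivrMr.
  apply: lt_le_trans h2 _; apply: ler_wpM2r; [exact: ltW | rewrite expr2; nra].
have ekk : - cH - l1 = kk by rewrite /l1; ring.
have hU1 : Ht l1 \in unitmx by apply: inj_unitmx => v; exact: Ht_inj.
have hdet : \det HX != 0.
  apply/eqP => h0; move: hU1; rewrite unitmxE unitfE -evHX det_map_mx h0 rmorph0.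
  by rewrite eqxx.
have hPair : Pair (\adj HX *m b0p) (\det HX).
  by rewrite /Pair mulmxA mul_mx_adj mul_scalar_mx.
have [w [q [hq0 hP hroot]]] := good_pair_ind hdet (leqnn _) hPair.
set G := \sum_i (w i 0) ^+ 2 - (g ^+ 2)%:P * q ^+ 2.
have hG l : G.[l] = dotv (ev l w) (ev l w) - g ^+ 2 * q.[l] ^+ 2.
  rewrite /G hornerD hornerN horner_sum hornerCM horner_exp dotvE; congr (_ - _).
  by apply: eq_bigr => i _; rewrite horner_exp !mxE expr2.
have hx l : q.[l] != 0 ->
    [/\ M l *m (q.[l]^-1 *: ev l w) = b0, inN (q.[l]^-1 *: ev l w) &
        dotv (ev l w) (ev l w) = q.[l] ^+ 2 * dotv (q.[l]^-1 *: ev l w) (q.[l]^-1 *: ev l w)].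
  move=> hq; have hN : inN (q.[l]^-1 *: ev l w) by rewrite -scalemxAr (Pair_evN l hP) scaler0.
  split => //.
    by rewrite -Ht_inN // -scalemxAr (Pair_ev l hP) scalerA mulVf // scale1r.
  by rewrite dotvZl dotvZr mulrA mulrA -expr2 -exprMn mulfV // expr1n mul1r.
have hGq l : G.[l] <= 0 -> q.[l] != 0.
  move=> hGl; apply/eqP => hq; have := hroot l hq; apply/negP; rewrite negbK.
  apply/eqP; apply: dotv_eq0; apply/eqP; rewrite eq_le dotv_ge0 andbT.
  by move: hGl; rewrite hG hq expr0n /= mulr0 subr0.
have hq1 : q.[l1] != 0.
  apply/eqP => hq; have := hroot l1 hq; apply/negP; rewrite negbK; apply/eqP.
  by apply: (Ht_inj hl1c); rewrite (Pair_ev l1 hP) hq scale0r.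
have hGl1 : G.[l1] < 0.
  have [h1 h2 h3] := hx l1 hq1.
  have hb := Ht_bound hl1c h2; rewrite Ht_inN // h1 ekk in hb.
  move: hb; set d := dotv _ _ => hb.
  rewrite hG h3; set c := q.[l1] ^+ 2.
  have hc : 0 < c by rewrite /c lt_def sqr_ge0 sqrf_eq0 hq1.
  have hd : d < g ^+ 2.
    have : kk ^+ 2 * d < kk ^+ 2 * g ^+ 2 by apply: le_lt_trans (hb erefl) kkb.
    by rewrite ltr_pM2l // exprn_gt0.
  rewrite -/d; have h4 : 0 < c * (g ^+ 2 - d) by rewrite mulr_gt0 // subr_gt0.
  lra.
case: (ltrP 0 G.[mu]) => hGmu.
  left.
  have hh : G.[l1] <= 0 <= G.[mu] by rewrite !ltW.
  have [x /andP [hx1 hx2] /rootP hGx] := poly_ivt (ltW hl1mu) hh.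
  have hxmu : x < mu.
    rewrite lt_neqAle hx2 andbT; apply/eqP => e; move: hGmu; rewrite -e hGx ltxx //.
  have hqx : q.[x] != 0 by apply: hGq; rewrite hGx.
  have [h1 h2 h3] := hx x hqx.
  exists x; split => //; exists (- (q.[x]^-1 *: ev x w)); apply/LGP; split.
  - by rewrite mulmxN h1.
  - rewrite dotvNl dotvNr opprK.
    have hq2 : q.[x] ^+ 2 != 0 by rewrite sqrf_eq0.
    apply: (mulfI hq2); rewrite -h3.
    by move: hGx; rewrite hG => /eqP; rewrite subr_eq0 => /eqP ->; rewrite mulrC.
  - by rewrite mulmxN h2 oppr0.
right.
have hqm := hGq mu hGmu.
have [h1 h2 h3] := hx mu hqm.
exists (- (q.[mu]^-1 *: ev mu w)); split.
- by rewrite mulmxN h1.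
- by rewrite mulmxN h2 oppr0.
rewrite dotvNl dotvNr opprK.
have hq2 : 0 < q.[mu] ^+ 2 by rewrite lt_def sqr_ge0 sqrf_eq0 hqm.
rewrite -(ler_pM2l hq2) -h3 [_ * g ^+ 2]mulrC; move: hGmu; rewrite hG; lra.
Qed.


Lemma QEP_of_pre l (u z : 'cV[R]_n) : LG_feasible A C b l u -> inN z -> M l *m z = u ->
  QEP_feasible A C b l z.
Proof.
move=> /LGP [h1 h2 h3] hzN hMz; split => //.
  apply/eqP => z0; move: h2; rewrite -hMz z0 mulmx0 dotv0r => /esym/eqP.
  by rewrite expf_eq0 /= (negPf g_neq0).
rewrite hMz h1 bbz.
have hb : dotv b0 z = - g ^+ 2 by rewrite -[b0]opprK -h1 dotvNl -dotM hMz h2.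
rewrite hb scalerA.
have -> : g ^- 2 * - g ^+ 2 = -1 by field; rewrite g_neq0.
by rewrite scaleN1r.
Qed.

Lemma LG_add l (x s : 'cV[R]_n) : M l *m x = - b0 -> inN x -> dotv x x <= g ^+ 2 ->
  s != 0 -> inN s -> M l *m s = 0 -> dotv x s = 0 ->
  LG_feasible A C b l (x + (Num.sqrt (g ^+ 2 - dotv x x) / vnorm s) *: s).
Proof.
move=> h1 h2 h3 hs hsN hMs hxs; apply/LGP; split.
- by rewrite mulmxDr -scalemxAr hMs scaler0 addr0.
- rewrite !dotvDl !dotvDr !dotvZl !dotvZr (dotvC s x) hxs !mulr0 addr0 add0r.
  have hss : 0 < dotv s s := dotv_gt0 hs.
  have hv : vnorm s != 0.
    by apply/eqP => h0; move: hss; rewrite -vnorm_sq h0 expr0n ltxx.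
  set t := Num.sqrt _.
  have ht : t ^+ 2 = g ^+ 2 - dotv x x by rewrite sqr_sqrtr // subr_ge0.
  rewrite -vnorm_sq in hss *.
  rewrite mulrA -expr2 exprMn ht expr2 expr2 expr2 in hss *.
  set vs := vnorm s in hv hss *.
  by field.
- by rewrite mulmxDr -scalemxAr hsN scaler0 addr0.
Qed.

Lemma LG_from_x l (x0 s : 'cV[R]_n) : M l *m x0 = - b0 -> inN x0 -> dotv x0 x0 <= g ^+ 2 ->
  s != 0 -> inN s -> M l *m s = 0 -> exists u, LG_feasible A C b l u.
Proof.
move=> h1 h2 h3 hs hsN hMs.
have hss : dotv s s != 0 := dotv_neq0 hs.
set c := dotv s x0 / dotv s s.
set xt := x0 - c *: s.
have hxs : dotv xt s = 0.
  by rewrite /xt dotvDl dotvNl dotvZl (dotvC x0 s) /c; field.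
have hMxt : M l *m xt = - b0 by rewrite /xt mulmxBr -scalemxAr hMs scaler0 subr0.
have hxtN : inN xt by rewrite /xt mulmxBr -scalemxAr hsN scaler0 subr0.
have hx0 : x0 = xt + c *: s by rewrite /xt subrK.
clearbody xt c.
have hle : dotv xt xt <= dotv x0 x0.
  rewrite hx0 !dotvDl !dotvDr !dotvZl !dotvZr (dotvC s xt) hxs !mulr0 !addr0 add0r.
  by rewrite lerDl mulrA mulr_ge0 ?dotv_ge0 // -expr2 sqr_ge0.
exists (xt + (Num.sqrt (g ^+ 2 - dotv xt xt) / vnorm s) *: s); apply: LG_add => //.
exact: le_trans hle h3.
Qed.

Lemma LGmin_QEP l u : LG_minimizer A C b l u ->
  forall l' z', QEP_feasible A C b l' z' -> l <= l'.
Proof.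
move=> [hu hmin] l' z' hz.
case: (eqVneq (dotv b0 z') 0) => hb; last exact: hmin _ _ (QEP_beta hz hb).
have hMz := QEP_beta0 hz hb; case: hz => [zn0 zN _].
case: (CORE l') => [[l0 [hl0 [u0 hu0]]]|[x0 [h1 h2 h3]]].
  exact: le_trans (hmin _ _ hu0) (ltW hl0).
have [u1 hu1] := LG_from_x h1 h2 h3 zn0 zN hMz.
exact: hmin _ _ hu1.
Qed.

Lemma QEPmin_LG l z : QEP_minimizer A C b l z ->
  forall l' u', LG_feasible A C b l' u' -> l <= l'.
Proof.
move=> [hz hmin] l' u' hu; have [z' hz'] := LG2QEP hu; exact: hmin _ _ hz'.
Qed.

Lemma pinv_inN l (X : 'M[R]_n) (y : 'cV[R]_n) : is_pinv (M l) X -> y = X *m M l *m y -> inN (M l *m y) -> inN y.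
Proof.
move=> [p1 p2 p3 p4] hy hMy; apply/inNP.
set w := y - P *m y.
have hMw : M l *m w = 0.
  by rewrite /w mulmxBr mulmxA MP -mulmxA (proj1 (inNP _) hMy) subrr.
have hPw : P *m w = 0 by rewrite /w mulmxBr mulmxA P_idem subrr.
have e1 : dotv w y = 0.
  by rewrite hy dotv_mul p4 -mulmxA hMw mulmx0 dotv0l.
have e2 : dotv w (P *m y) = 0 by rewrite dotv_mul P_sym hPw dotv0l.
have : dotv w w = 0 by rewrite {2}/w dotvDr dotvNr e1 e2 subrr.
move/dotv_eq0 => /eqP; rewrite /w subr_eq0 => /eqP <-; done.
Qed.

Lemma noeig l : (~~ eigenvalue H l \/ (eigenvalue H l /\
     ~ (exists s, is_eigvec H l s /\ inNull C s))) ->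
  ~ exists s : 'cV[R]_n, [/\ s != 0, inN s & M l *m s = 0].
Proof.
move=> hc [s [hs hsN hMs]].
have hHs : H *m s = l *: s.
  by move/eqP: hMs; rewrite /shiftM mulmxBl mul_scalar_mx subr_eq0 => /eqP.
case: hc => [/negP hne|[_ hne]]; last by apply: hne; exists s.
apply: hne; apply/eigenvalueP; exists s^T; last by rewrite trmx_eq0.
by rewrite -H_sym -trmx_mul hHs linearZ.
Qed.

Lemma main_sec :
  (forall (l : R) (u : 'cV[R]_n), LG_minimizer A C b l u ->
     (exists z, QEP_minimizer A C b l z) /\
     (forall Mdag : 'M[R]_n, is_pinv (shiftM A C l) Mdag ->
        (~~ eigenvalue (PAP A C) l \/
         (eigenvalue (PAP A C) l /\
          ~ (exists s, is_eigvec (PAP A C) l s /\ inNull C s))) ->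
        QEP_minimizer A C b l (Mdag *m u)) /\
     (forall s : 'cV[R]_n, eigenvalue (PAP A C) l ->
        is_eigvec (PAP A C) l s -> inNull C s ->
        QEP_minimizer A C b l s)) /\
  (forall (l : R) (z : 'cV[R]_n), QEP_minimizer A C b l z ->
     (exists u, LG_minimizer A C b l u) /\
     (dotv (b0v A C b) z != 0 ->
        LG_minimizer A C b l
          ((- (gam C b ^+ 2 / dotv (b0v A C b) z)) *: (shiftM A C l *m z))) /\
     (dotv (b0v A C b) z = 0 ->
        forall Mdag : 'M[R]_n, is_pinv (shiftM A C l) Mdag ->
        let x := - (Mdag *m b0v A C b) in
        vnorm x <= gam C b /\
        LG_minimizer A C b l
          (x + (Num.sqrt (gam C b ^+ 2 - vnorm x ^+ 2) / vnorm z) *: z))).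
Proof.
split.
  move=> l u hmin; have [hu _] := hmin; have hQ := LGmin_QEP hmin.
  have [h1 h2 h3] := proj1 (LGP l u) hu.
  split; [|split].
  - by have [z hz] := LG2QEP hu; exists z; split.
  - move=> X hX hc; split => //.
    have hU : Ht l \in unitmx.
      case: (boolP (Ht l \in unitmx)) => // hnU; exfalso.
      by apply: (noeig hc); exact: Ht_nonunit hnU.
    set z0 := invmx (Ht l) *m u.
    have hz : Ht l *m z0 = u by rewrite /z0 mulmxA mulmxV // mul1mx.
    have hz0N : inN z0 := Ht_sol h3 hz.
    have hMz0 : M l *m z0 = u by rewrite -Ht_inN.
    have [p1 p2 p3 p4] := hX.
    have hMy : M l *m (X *m u) = u by rewrite -hMz0 !mulmxA p1.
    have hyy : X *m u = X *m M l *m (X *m u) by rewrite mulmxA p2.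
    have hyN : inN (X *m u) by apply: (pinv_inN hX hyy); rewrite hMy.
    exact: QEP_of_pre hu hyN hMy.
  - move=> s _ [hs hHs] hsN; split => //; apply: eig_QEP hu hs hsN _.
    by rewrite /shiftM mulmxBl mul_scalar_mx hHs subrr.
move=> l z hmin; have [hz hminz] := hmin; have hL := QEPmin_LG hmin.
have hcore : exists x0, [/\ M l *m x0 = - b0, inN x0 & dotv x0 x0 <= g ^+ 2].
  case: (CORE l) => [[l0 [hl0 [u0 hu0]]]|//].
  have [z0 hz0] := LG2QEP hu0; have := hminz _ _ hz0.
  by move/(lt_le_trans hl0); rewrite ltxx.
split; [|split].
- case: (eqVneq (dotv b0 z) 0) => hb; last by exists ((- (g ^+ 2 / dotv b0 z)) *: (M l *m z)); split => //; exact: QEP_beta.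
  have hMz := QEP_beta0 hz hb; case: hz => [zn0 zN _].
  have [x0 [h1 h2 h3]] := hcore.
  have [u1 hu1] := LG_from_x h1 h2 h3 zn0 zN hMz.
  by exists u1; split.
- by move=> hb; split => //; exact: QEP_beta.
move=> hb X hX x.
have hMz := QEP_beta0 hz hb; case: hz => [zn0 zN _].
have [x0 [h1 h2 h3]] := hcore.
have [p1 p2 p3 p4] := hX.
have hQQ : X *m M l *m (X *m M l) = X *m M l by rewrite mulmxA p2.
have hx : x = X *m M l *m x0 by rewrite /x -mulmxA h1 mulmxN.
clearbody x.
have hQx : X *m M l *m x = x by rewrite hx mulmxA hQQ.
have hMx : M l *m x = - b0 by rewrite hx !mulmxA p1 h1.
have hxN : inN x.
  apply: (pinv_inN hX (esym hQx)); rewrite hMx mulmxN b0_inN oppr0 //.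
have hxr : dotv x (x0 - x) = 0.
  rewrite {1}hx dotvC dotv_mul p4 mulmxBr hQx -hx subrr dotv0l //.
have hle : dotv x x <= dotv x0 x0.
  move: hxr; set r := x0 - x => hxr.
  have e : x0 = x + r by rewrite /r addrC subrK.
  clearbody r; rewrite e.
  rewrite !dotvDl !dotvDr (dotvC r x) hxr addr0 add0r lerDl; exact: dotv_ge0.
have hxx : dotv x x <= g ^+ 2 := le_trans hle h3.
have hxz : dotv x z = 0.
  by rewrite -hQx dotvC dotv_mul p4 -mulmxA hMz mulmx0 dotv0l.
split.
  rewrite /vnorm -(ger0_norm (ltW g_gt0)) -sqrtr_sqr ler_sqrt ?sqr_ge0 //.
split => //; rewrite vnorm_sq; exact: LG_add.
Qed.

End Main.

Theorem theorem2p8 (R : rcfType) (n m : nat) (A : 'M[R]_n) (C : 'M[R]_(n, m))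
    (b : 'cV[R]_m) :
  A^T = A ->
  (m < n)%N ->
  \rank C = m ->
  vnorm (n0v C b) < 1 ->
  b0v A C b != 0 ->
  (* Part (1) *)
  (forall (l : R) (u : 'cV[R]_n), LG_minimizer A C b l u ->
     (exists z, QEP_minimizer A C b l z) /\
     (forall Mdag : 'M[R]_n, is_pinv (shiftM A C l) Mdag ->
        (~~ eigenvalue (PAP A C) l \/
         (eigenvalue (PAP A C) l /\
          ~ (exists s, is_eigvec (PAP A C) l s /\ inNull C s))) ->
        QEP_minimizer A C b l (Mdag *m u)) /\
     (forall s : 'cV[R]_n, eigenvalue (PAP A C) l ->
        is_eigvec (PAP A C) l s -> inNull C s ->
        QEP_minimizer A C b l s)) /\
  (* Part (2) *)
  (forall (l : R) (z : 'cV[R]_n), QEP_minimizer A C b l z ->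
     (exists u, LG_minimizer A C b l u) /\
     (dotv (b0v A C b) z != 0 ->
        LG_minimizer A C b l
          ((- (gam C b ^+ 2 / dotv (b0v A C b) z)) *: (shiftM A C l *m z))) /\
     (dotv (b0v A C b) z = 0 ->
        forall Mdag : 'M[R]_n, is_pinv (shiftM A C l) Mdag ->
        let x := - (Mdag *m b0v A C b) in
        vnorm x <= gam C b /\
        LG_minimizer A C b l
          (x + (Num.sqrt (gam C b ^+ 2 - vnorm x ^+ 2) / vnorm z) *: z))).
Proof. by move=> hA _ hC hn0 _; exact: main_sec. Qed.
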